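(* In the setting where $\mathcal{H}$ is finite-dimensional with Hamiltonian $H$, $p_1,\dots,p_k\ge0$ sum to $1$, $\rho_1,\dots,\rho_k$ are density operators, $\rho^N:=\rho_1^{\otimes(N-\sum_{i\ge2}\lfloor p_iN\rfloor)}\otimes\bigotimes_{i\ge2}\rho_i^{\otimes\lfloor p_iN\rfloor}$ and $H_N=\sum_{j=1}^Nh_j$ with $h_j$ equal to $H$ on the $j$-th factor, assume there exists $\beta\in(0,\infty)$ with $S_{\mathrm{vN}}(\rho_\beta)=\sum_ip_iS_{\mathrm{vN}}(\rho_i)$, where $\rho_\beta=e^{-\beta H}/\mathrm{tr}[e^{-\beta H}]$. Then $$\liminf_{N\to\infty}\frac1N\min_U\mathrm{tr}\big[H_N U\rho^NU^\dagger\big]\ \ge\ \mathrm{tr}[H\rho_\beta].$$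
   Context: $S_{\mathrm{vN}}(\sigma)=-\mathrm{tr}[\sigma\ln\sigma]$ is the von Neumann entropy; the minimum is over all unitaries on $\mathcal{H}^{\otimes N}$; $\rho_i^{\otimes 0}$ means no factor. *)

(* Defs.v *)
From HB Require Import structures.
From mathcomp Require Import all_boot all_order all_algebra.
From mathcomp Require Import sesquilinear spectral.
From mathcomp Require Import complex mxtens.
From mathcomp Require Import classical_sets reals constructive_ereal ereal
  topology normedtype sequences exp.

Set Implicit Arguments.
Unset Strict Implicit.
Unset Printing Implicit Defensive.

Import Order.TTheory GRing.Theory Num.Theory.
Local Open Scope ring_scope.
Local Open Scope sesquilinear_scope.

Section Quantum.
Variable R : realType.
Local Notation C := R[i].

Definition psdmx n (A : 'M[C]_n) : Prop :=
  A \is hermsymmx /\ forall v : 'rV[C]_n, 0 <= (v *m A *m v ^t*) ord0 ord0.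

Definition density n (A : 'M[C]_n) : Prop := psdmx A /\ \tr A = 1.

(* functional calculus f(A) for a Hermitian (normal) matrix A, through the
   spectral decomposition A = P^-1 diag(lambda) P of spectral.v,
   with f applied to the (real) eigenvalues *)
Definition mxfun (f : R -> R) n (A : 'M[C]_n) : 'M[C]_n :=
  invmx (spectralmx A) *m
  diag_mx (map_mx (fun z : C => (f (complex.Re z))%:C%C) (spectral_diag A))
  *m spectralmx A.

Definition vN_entropy n (s : 'M[C]_n) : R :=
  - complex.Re (\tr (s *m mxfun (@ln R) s)).

Definition gibbs (beta : R) n (H : 'M[C]_n) : 'M[C]_n :=
  let E := mxfun (fun x => @expR R (- beta * x)) H in (\tr E)^-1 *: E.

Fixpoint tens d (M : nat) (F : nat -> 'M[C]_d) : 'M[C]_(d ^ M) :=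
  match M with
  | 0 => 1%:M
  | M'.+1 => castmx (esym (expnS d M'), esym (expnS d M'))
                    (F 0%N *t tens M' (fun i => F i.+1))
  end.

Definition local_ham d (N : nat) (H : 'M[C]_d) : 'M[C]_(d ^ N) :=
  \sum_(j < N) tens N (fun i => if i == j then H else 1%:M).

(* number of copies of rho_i in rho^N (0-based index i : 'I_k):
   first block N - sum_{i>=1} floor(p_i N), other blocks floor(p_i N) *)
Definition ncopies k (p : 'I_k -> R) (N : nat) (i : 'I_k) : nat :=
  if val i == 0%N then (N - \sum_(l < k | (0 < val l)%N) Num.truncn (p l * N%:R))%N
  else Num.truncn (p i * N%:R).

Definition factor_seq d k (p : 'I_k -> R) (rho : 'I_k -> 'M[C]_d) (N : nat)
  : seq 'M[C]_d :=
  flatten [seq nseq (ncopies p N i) (rho i) | i <- enum 'I_k].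

Definition rhoN d k (p : 'I_k -> R) (rho : 'I_k -> 'M[C]_d) (N : nat)
  : 'M[C]_(d ^ N) :=
  tens N (fun j => nth 0 (factor_seq p rho N) j).

(* energy tr[H_N U rho U^dagger] (real part; it is real) *)
Definition energy n (Hn rho U : 'M[C]_n) : R :=
  complex.Re (\tr (Hn *m (U *m rho *m U ^t*))).

(* min over unitaries U of tr[H_N U rho^N U^dagger] (the min is attained,
   so it equals this infimum) *)
Definition passive_energy n (Hn rho : 'M[C]_n) : R :=
  inf [set energy Hn rho U | U in [set U : 'M[C]_n | U \is unitarymx]].

End Quantum.

(* Main.v *)
Require Import Defs.
From HB Require Import structures.
From mathcomp Require Import all_boot all_order all_algebra.
From mathcomp Require Import sesquilinear spectral.
From mathcomp Require Import complex mxtens.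
From mathcomp Require Import classical_sets reals constructive_ereal ereal
  topology normedtype sequences exp.
From mathcomp Require Import ring lra.
Import Order.TTheory GRing.Theory Num.Theory.
Local Open Scope ring_scope.
Set Implicit Arguments.
Unset Strict Implicit.
Local Open Scope sesquilinear_scope.

Section Scalar.
Variable R : realType.

Lemma ln_le_sub1 (x : R) : 0 < x -> ln x <= x - 1.
Proof.
move=> x0; have := @le_ln1Dx R (x - 1).
have -> : 1 + (x - 1) = x by ring.
apply; lra.
Qed.

Lemma xlnxM (x y : R) : 0 <= x -> 0 <= y ->
  (x * y) * ln (x * y) = (x * y) * ln x + (x * y) * ln y.
Proof.
rewrite le0r => /orP[/eqP->|x0]; first by rewrite !mul0r !add0r.
rewrite le0r => /orP[/eqP->|y0]; first by rewrite !mulr0 !mul0r addr0.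
by rewrite lnM ?posrE // mulrDr.
Qed.

Lemma jensen_exp n (w x : 'I_n -> R) : (forall p, 0 <= w p) ->
  \sum_p w p = 1 -> expR (\sum_p w p * x p) <= \sum_p w p * expR (x p).
Proof.
move=> w0 w1; set m := \sum_p w p * x p.
have mE : m = \sum_p w p * x p by []. clearbody m.
have H1 p : w p * (expR m * (1 + (x p - m))) <= w p * expR (x p).
  apply: (ler_wpM2l (w0 p)).
  have := expR_ge1Dx (x p - m); rewrite expRD expRN.
  move=> h.
  have e : expR (x p) = expR m * (expR (x p) * (expR m)^-1).
    by rewrite mulrCA mulfV ?gt_eqF ?expR_gt0 // mulr1.
  rewrite [X in _ <= X]e.
  exact: (ler_wpM2l (ltW (expR_gt0 m))).
apply: le_trans (ler_sum _ (fun p _ => H1 p)).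
have -> : \sum_p w p * (expR m * (1 + (x p - m))) =
   expR m * \sum_p w p + (expR m * \sum_p w p * x p - expR m * m * \sum_p w p).
  rewrite !mulr_sumr -sumrB -big_split /=; apply: eq_bigr => p _; ring.
by rewrite w1 -mE !mulr1 subrr addr0.
Qed.

Lemma gibbs_ineq n (P : 'I_n -> 'I_n -> R) (a s : 'I_n -> R) (b : R) :
  0 < b -> (forall p q, 0 <= P p q) -> (forall q, \sum_p P p q = 1) ->
  (forall p, \sum_q P p q = 1) -> (forall q, 0 <= s q) -> \sum_q s q = 1 ->
  - \sum_q s q * ln (s q) - ln (\sum_p expR (- b * a p))
    <= b * \sum_p \sum_q a p * s q * P p q.
Proof.
move=> b0 P0 Pc Pr s0 s1.
set Z := \sum_p expR (- b * a p).
have Z0 : 0 < Z.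
  case: n P a s P0 Pc Pr s0 s1 @Z => [|n] P a s P0 Pc Pr s0 s1 /=.
    by move: s1; rewrite big_ord0 => /esym/eqP; rewrite oner_eq0.
  rewrite (bigD1 ord0) //=; apply: ltr_pwDl; first exact: expR_gt0.
  by apply: sumr_ge0 => i _; exact: ltW (expR_gt0 _).
pose w q := \sum_p P p q * expR (- b * a p).
have Jq q : expR (\sum_p P p q * (- b * a p)) <= w q by exact: jensen_exp.
have w0 q : 0 < w q by apply: lt_le_trans (Jq q); exact: expR_gt0.
have lnw q : \sum_p P p q * (- b * a p) <= ln (w q).
  by rewrite -[X in X <= _]expRK ler_ln ?posrE ?expR_gt0 ?w0.
have sw : \sum_q w q = Z.
  rewrite /w exchange_big /=; apply: eq_bigr => p _.
  by rewrite -mulr_suml Pr mul1r.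
have -> : b * \sum_p \sum_q a p * s q * P p q =
    \sum_q s q * - \sum_p P p q * (- b * a p).
  rewrite exchange_big mulr_sumr; apply: eq_bigr => q _.
  rewrite mulr_sumr -sumrN mulr_sumr; apply: eq_bigr => p _; ring.
have step q : s q - w q / Z <= s q * (ln (s q) - ln (w q) + ln Z).
  have := s0 q; rewrite le0r => /orP[/eqP->|sq0].
    rewrite mul0r sub0r oppr_le0; apply: divr_ge0; exact: ltW.
  have h := ln_le_sub1 (divr_gt0 (w0 q) (mulr_gt0 Z0 sq0)).
  rewrite ln_div ?posrE ?mulr_gt0 // lnM ?posrE // in h.
  have e : w q / Z = s q * (w q / (Z * s q)).
    by field; rewrite ?gt_eqF ?mulr_gt0.
  rewrite e; set t := w q / (Z * s q) in h *.
  nra.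
have sumstep : 0 <= \sum_q s q * (ln (s q) - ln (w q) + ln Z).
  apply: le_trans (ler_sum _ (fun q _ => step q)).
  rewrite sumrB -mulr_suml sw s1 mulfV ?gt_eqF // subrr //.
have lnZ : ln Z = \sum_q s q * ln Z by rewrite -mulr_suml s1 mul1r.
have : \sum_q s q * (ln (s q) - ln (w q) + ln Z) =
   \sum_q s q * ln (s q) - \sum_q s q * ln (w q) + ln Z.
  by rewrite [in RHS]lnZ -sumrB -big_split /=; apply: eq_bigr => q _; ring.
move=> E; rewrite E in sumstep.
have : \sum_q s q * - \sum_p P p q * (- b * a p) >= \sum_q s q * - ln (w q).
  apply: ler_sum => q _; apply: (ler_wpM2l (s0 q)); rewrite lerN2; exact: lnw.
have -> : \sum_q s q * - ln (w q) = - \sum_q s q * ln (w q).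
  by rewrite -sumrN; apply: eq_bigr => q _; ring.
lra.
Qed.

End Scalar.

Set Implicit Arguments.
Unset Strict Implicit.
Local Open Scope sesquilinear_scope.

Section Mx.
Variable R : realType.
Local Notation C := R[i].

Definition fC (f : R -> R) := fun z : C => (f (complex.Re z))%:C%C.

Lemma mxfunE f n (A : 'M[C]_n) : mxfun f A =
  invmx (spectralmx A) *m diag_mx (map_mx (fC f) (spectral_diag A)) *m spectralmx A.
Proof. by []. Qed.

Lemma mxfun_diag f n (A W : 'M[C]_n) (w : 'rV[C]_n) : A \is normalmx ->
  W \in unitmx -> A = invmx W *m diag_mx w *m W ->
  mxfun f A = invmx W *m diag_mx (map_mx (fC f) w) *m W.
Proof.
move=> /orthomx_spectralP hA Wu eA.
set P := spectralmx A in hA *; set D := spectral_diag A in hA *.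
have Pu : P \in unitmx by exact: spectral_unit.
rewrite mxfunE -/P -/D.
set M := P *m invmx W.
have DM : diag_mx D *m M = M *m diag_mx w.
  have : P *m A *m invmx W = P *m A *m invmx W by [].
  rewrite {1}hA eA !mulmxA mulmxV // mul1mx.
  by rewrite -!mulmxA mulmxV // mulmx1 !mulmxA.
have eP : invmx W = invmx P *m M by rewrite /M mulmxA mulVmx // mul1mx.
have MW : M *m W = P by rewrite /M -mulmxA mulVmx // mulmx1.
clearbody M.
have fDM : diag_mx (map_mx (fC f) D) *m M = M *m diag_mx (map_mx (fC f) w).
  apply/matrixP => i j; move/matrixP: DM => /(_ i j).
  rewrite !mul_diag_mx !mul_mx_diag !mxE.
  have [Mij0|Mij] := eqVneq (M i j) 0; first by rewrite Mij0 !(mulr0, mul0r).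
  by rewrite [M i j * _]mulrC => /(mulIf Mij) ->; rewrite mulrC.
rewrite eP -!mulmxA; congr (_ *m _); rewrite !mulmxA -fDM.
by rewrite -!mulmxA MW.
Qed.

Lemma tr_conj n (W X : 'M[C]_n) : W \in unitmx -> \tr (invmx W *m X *m W) = \tr X.
Proof. by move=> Wu; rewrite mxtrace_mulC mulmxA mulmxV // mul1mx. Qed.

End Mx.

Set Implicit Arguments.
Unset Strict Implicit.
Local Open Scope sesquilinear_scope.

Section Tens.
Variable R : realType.
Local Notation C := R[i].
Variable d : nat.

Lemma castmx_mulmx m m' (e : m = m') (A B : 'M[C]_m) :
  castmx (e, e) A *m castmx (e, e) B = castmx (e, e) (A *m B).
Proof. by case: m' / e. Qed.

Lemma castmx_1 m m' (e : m = m') : castmx (e, e) (1%:M : 'M[C]_m) = 1%:M.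
Proof. by case: m' / e. Qed.

Lemma castmx_tC m m' (e : m = m') (A : 'M[C]_m) :
  (castmx (e, e) A)^t* = castmx (e, e) (A^t*).
Proof. by case: m' / e. Qed.

Lemma castmx_add m m' (e : m = m') (A B : 'M[C]_m) :
  castmx (e, e) (A + B) = castmx (e, e) A + castmx (e, e) B.
Proof. by case: m' / e. Qed.

Lemma tensmx_tC m n p q (A : 'M[C]_(m, n)) (B : 'M[C]_(p, q)) :
  (A *t B)^t* = A^t* *t B^t*.
Proof. by apply/matrixP => i j; rewrite !mxE rmorphM. Qed.

Lemma tensmx_11 m n : (1%:M : 'M[C]_m) *t (1%:M : 'M[C]_n) = 1%:M.
Proof.
apply/matrixP => i j.
case: (mxtens_indexP i) => a b; case: (mxtens_indexP j) => a' b'.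
rewrite tensmxE !mxE (can_eq (@mxtens_indexK m n)) xpair_eqE.
by case: (a == a'); case: (b == b'); rewrite ?mulr1n ?mulr0n ?mulr1 ?mulr0.
Qed.

Lemma tensS N (F : nat -> 'M[C]_d) : tens N.+1 F =
  castmx (esym (expnS d N), esym (expnS d N)) (F 0%N *t tens N (fun i => F i.+1)).
Proof. by []. Qed.

Lemma tens_eq N (F G : nat -> 'M[C]_d) : (forall i, (i < N)%N -> F i = G i) ->
  tens N F = tens N G.
Proof.
elim: N F G => [//|N IH] F G FG; rewrite !tensS FG //.
by rewrite (IH (fun i => F i.+1) (fun i => G i.+1)) // => i iN; apply: FG.
Qed.

Lemma tens_mul N (F G : nat -> 'M[C]_d) :
  tens N F *m tens N G = tens N (fun i => F i *m G i).
Proof.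
elim: N F G => [|N IH] F G; first by rewrite /= mulmx1.
by rewrite !tensS castmx_mulmx tensmx_mul IH.
Qed.

Lemma tens_1 N : tens N (fun _ => (1%:M : 'M[C]_d)) = 1%:M.
Proof.
elim: N => [//|N IH]; rewrite tensS IH tensmx_11; exact: castmx_1.
Qed.

Lemma tens_tC N (F : nat -> 'M[C]_d) :
  (tens N F)^t* = tens N (fun i => (F i)^t*).
Proof.
elim: N F => [|N IH] F; first by rewrite /= trmx1 map_mx1.
by rewrite !tensS castmx_tC tensmx_tC IH.
Qed.

Lemma tens_unitary N (F : nat -> 'M[C]_d) :
  (forall i, (i < N)%N -> F i \is unitarymx) -> tens N F \is unitarymx.
Proof.
move=> Fu; apply/unitarymxP; rewrite tens_tC tens_mul.
rewrite (tens_eq (G := fun _ => 1%:M)) ?tens_1 // => i iN.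
exact/unitarymxP/Fu.
Qed.

Definition tidx N (a : 'I_d) (b : 'I_(d ^ N)) : 'I_(d ^ N.+1) :=
  cast_ord (esym (expnS d N)) (mxtens_index (a, b)).

Lemma tidxP N (q : 'I_(d ^ N.+1)) : exists a b, q = @tidx N a b.
Proof.
set q' := cast_ord (expnS d N) q.
exists (mxtens_unindex q').1, (mxtens_unindex q').2.
rewrite /tidx -surjective_pairing mxtens_unindexK /q'.
by apply: val_inj.
Qed.

Lemma tidx_inj N a b a' b' : (@tidx N a b == tidx a' b') = (a == a') && (b == b').
Proof.
rewrite /tidx (inj_eq (@cast_ord_inj _ _ _)) (can_eq (@mxtens_indexK _ _)).
by rewrite xpair_eqE.
Qed.

Lemma sum_tidx (V : nmodType) N (F : 'I_(d ^ N.+1) -> V) :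
  \sum_q F q = \sum_a \sum_b F (@tidx N a b).
Proof.
rewrite (reindex (cast_ord (esym (expnS d N)))) /=; last first.
  by exists (cast_ord (expnS d N)) => i _; apply: val_inj.
rewrite pair_big /=.
rewrite (reindex (@mxtens_index d (d ^ N))) /=; last first.
  by exists (@mxtens_unindex d (d ^ N)) => i _; rewrite (mxtens_indexK, mxtens_unindexK).
by apply: eq_bigr => -[a b] _.
Qed.

Lemma castE m m' (e : m = m') (A : 'M[C]_(m)) i j :
  castmx (e, e) A i j = A (cast_ord (esym e) i) (cast_ord (esym e) j).
Proof. by rewrite castmxE. Qed.

Lemma tens_tidx N (F : nat -> 'M[C]_d) a b a' b' :
  tens N.+1 F (tidx a b) (tidx a' b') = F 0%N a a' * tens N (fun i => F i.+1) b b'.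
Proof.
rewrite tensS castmxE /tidx.
have h (x : 'I_(d * d ^ N)) : cast_ord (esym (esym (expnS d N))) (cast_ord (esym (expnS d N)) x) = x.
  by apply: val_inj.
by rewrite !h tensmxE.
Qed.

Lemma castmx_tidx N (A : 'M[C]_(d * d ^ N)) a b a' b' :
  castmx (esym (expnS d N), esym (expnS d N)) A (tidx a b) (tidx a' b') =
  A (mxtens_index (a, b)) (mxtens_index (a', b')).
Proof.
rewrite castmxE /tidx.
have h (x : 'I_(d * d ^ N)) : cast_ord (esym (esym (expnS d N))) (cast_ord (esym (expnS d N)) x) = x.
  by apply: val_inj.
by rewrite !h.
Qed.


Lemma diag_of n (A : 'M[C]_n) : (forall p q, p != q -> A p q = 0) ->
  A = diag_mx (\row_q A q q).
Proof.
move=> h; apply/matrixP => p q; rewrite !mxE.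
by case: eqVneq => [->|/h ->]; rewrite ?mulr1n ?mulr0n.
Qed.

Lemma ReM_real (z : C) (r : R) : complex.Re (z * r%:C%C) = complex.Re z * r.
Proof. by case: z => a b; rewrite /= mulr0 subr0. Qed.

Lemma Re_real (r : R) : complex.Re (r%:C%C) = r.
Proof. by []. Qed.

Lemma tens_diag_prob N (x : nat -> 'I_d -> R) (F : nat -> 'M[C]_d) :
  (forall i, (i < N)%N -> F i = diag_mx (\row_a (x i a)%:C%C)) ->
  (forall i a, (i < N)%N -> 0 <= x i a) ->
  (forall i, (i < N)%N -> \sum_a x i a = 1) ->
  (forall p q, p != q -> tens N F p q = 0) /\
  exists t : 'I_(d ^ N) -> R,
    [/\ forall q, tens N F q q = (t q)%:C%C, forall q, 0 <= t q,
         \sum_q t q = 1 &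
         \sum_q t q * ln (t q) = \sum_(j < N) \sum_a x j a * ln (x j a)].
Proof.
elim: N x F => [|N IH] x F eF x0 x1.
  split; first by move=> p q pq; rewrite /= mxE (negbTE pq).
  exists (fun _ => 1); split => //.
  - by move=> q; rewrite /= mxE eqxx.
  - by rewrite big_ord1.
  - by rewrite ln1 mulr0 big_ord0 big_ord1.
have [offd [t [tE t0 t1 tln]]] := IH (fun i => x i.+1) (fun i => F i.+1)
  (fun i hi => eF i.+1 hi) (fun i a hi => x0 i.+1 a hi) (fun i hi => x1 i.+1 hi).
have F0 : F 0%N = diag_mx (\row_a (x 0%N a)%:C%C) by exact: eF.
split.
  move=> p q; have [a [b ->]] := tidxP p; have [a' [b' ->]] := tidxP q.
  rewrite tidx_inj negb_and tens_tidx F0 => /orP[aa|bb].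
    by rewrite mxE (negbTE aa) mulr0n mul0r.
  by rewrite offd // mulr0.
pose t' q := complex.Re (tens N.+1 F q q).
have t'E a b : t' (tidx a b) = x 0%N a * t b.
  by rewrite /t' tens_tidx F0 tE !mxE eqxx mulr1n -rmorphM.
exists t'; split.
- move=> q; have [a [b ->]] := tidxP q.
  by rewrite t'E tens_tidx F0 tE !mxE eqxx mulr1n -rmorphM.
- move=> q; have [a [b ->]] := tidxP q.
  by rewrite t'E mulr_ge0 // x0.
- rewrite sum_tidx -(x1 0%N) //; apply: eq_bigr => a _.
  by rewrite -[RHS]mulr1 -t1 mulr_sumr; apply: eq_bigr => b _; rewrite t'E.
- rewrite sum_tidx big_ord_recl /= -tln.
  have -> : \sum_a x 0%N a * ln (x 0%N a) =
     \sum_a \sum_b (x 0%N a * t b) * ln (x 0%N a).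
    apply: eq_bigr => a _; rewrite -mulr_suml -mulr_sumr t1 mulr1 //.
  have -> : \sum_q t q * ln (t q) =
     \sum_a \sum_b (x 0%N a * t b) * ln (t b).
    rewrite exchange_big /=; apply: eq_bigr => b _.
    by rewrite -mulr_suml -mulr_suml x1 // mul1r.
  rewrite -big_split /=; apply: eq_bigr => a _; rewrite -big_split /=.
  apply: eq_bigr => b _; rewrite t'E xlnxM //; first exact: x0.
Qed.


Definition Eham N (u : 'rV[C]_d) : 'M[C]_(d ^ N) :=
  \sum_(j < N) tens N (fun i => if i == j then diag_mx u else 1%:M).

Lemma Eham_tidx N u a b a' b' : Eham N.+1 u (tidx a b) (tidx a' b') =
  diag_mx u a a' * (b == b')%:R + (a == a')%:R * Eham N u b b'.
Proof.
rewrite /Eham !summxE big_ord_recl tens_tidx /=.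
rewrite tens_1; congr (_ + _); first by rewrite [1%:M b b']mxE.
rewrite mulr_sumr; apply: eq_bigr => j _; rewrite castmx_tidx [LHS]mxE !mxtens_indexK /= [1%:M a a']mxE.
by congr (_ * _).
Qed.

Lemma Eham_prop N u (b : R) :
  (forall p q, p != q -> Eham N u p q = 0) /\
  \sum_q expR (- b * complex.Re (Eham N u q q)) =
    (\sum_a expR (- b * complex.Re (u 0 a))) ^+ N.
Proof.
elim: N => [|N [offd IH]].
  split; first by move=> p q _; rewrite /Eham big_ord0 mxE.
  by rewrite big_ord1 /Eham big_ord0 mxE mulr0 expR0 expr0.
split.
  move=> p q; have [a [b' ->]] := tidxP p; have [a' [b'' ->]] := tidxP q.
  rewrite tidx_inj negb_and Eham_tidx => /orP[aa|bb].
    by rewrite mxE (negbTE aa) mulr0n mul0r mulr0n mul0r addr0.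
  by rewrite (negbTE bb) mulr0n mulr0 offd // mulr0 addr0.
rewrite sum_tidx exprS -IH mulr_suml; apply: eq_bigr => a _.
rewrite mulr_sumr; apply: eq_bigr => b' _.
rewrite Eham_tidx !eqxx !mulr1n mulr1 mul1r mxE eqxx mulr1n raddfD /=.
by rewrite mulrDr expRD.
Qed.

Lemma unitary_tC_mul n (V : 'M[C]_n) : V \is unitarymx -> V^t* *m V = 1%:M.
Proof.
move=> Vu; have := Vu; rewrite -trmxC_unitary => /unitarymxP.
by rewrite trmxCK.
Qed.

Lemma local_ham_decomp N (H V : 'M[C]_d) u : V \is unitarymx ->
  H = V^t* *m diag_mx u *m V ->
  local_ham N H = (tens N (fun _ => V))^t* *m Eham N u *m tens N (fun _ => V).
Proof.
move=> Vu eH; rewrite /local_ham /Eham mulmx_sumr mulmx_suml.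
apply: eq_bigr => j _; rewrite tens_tC !tens_mul; apply: tens_eq => i _.
case: (i == j); first by rewrite eH.
by rewrite mulmx1 unitary_tC_mul.
Qed.

End Tens.

Set Implicit Arguments.
Unset Strict Implicit.
Local Open Scope sesquilinear_scope.

Section Gen.
Variable C : numClosedFieldType.

Lemma trmxC_mulG m n p (A : 'M[C]_(m, n)) (B : 'M[C]_(n, p)) :
  (A *m B)^t* = B^t* *m A^t*.
Proof. by rewrite trmx_mul map_mxM. Qed.

Lemma unitary_tC_mulG n (V : 'M[C]_n) : V \is unitarymx -> V^t* *m V = 1%:M.
Proof.
move=> Vu; have := Vu; rewrite -trmxC_unitary => /unitarymxP.
by rewrite trmxCK.
Qed.

Lemma tr_energy_gen n (Hn rh X Y U : 'M[C]_n) (e t : 'rV[C]_n) :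
  X \is unitarymx -> Y \is unitarymx -> U \is unitarymx ->
  Hn = X^t* *m diag_mx e *m X -> rh = Y^t* *m diag_mx t *m Y ->
  let M := X *m U *m Y^t* in
  M \is unitarymx /\
  \tr (Hn *m (U *m rh *m U^t*)) =
     \sum_p \sum_q e 0 p * (t 0 q * (M p q * (M p q)^*)).
Proof.
move=> Xu Yu Uu eH erh M.
have Mu : M \is unitarymx.
  by apply: mul_unitarymx; [exact: mul_unitarymx | rewrite trmxC_unitary].
split => //.
have MtE : M^t* = Y *m U^t* *m X^t*.
  by rewrite /M !trmxC_mulG trmxCK mulmxA.
have -> : Hn *m (U *m rh *m U^t*) =
    X^t* *m (diag_mx e *m M *m diag_mx t *m M^t*) *m X.
  rewrite MtE eH erh /M !mulmxA.
  by rewrite -[_ *m X^t* *m X]mulmxA unitary_tC_mulG // mulmx1.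
rewrite mxtrace_mulC [X *m (_ *m _)]mulmxA (unitarymxP Xu) mul1mx.
rewrite /mxtrace; apply: eq_bigr => p _.
rewrite mxE; apply: eq_bigr => q _.
rewrite mul_mx_diag mul_diag_mx !mxE.
by rewrite -!mulrA; congr (_ * _); rewrite mulrCA.
Qed.

Lemma unitary_rowsum n (M : 'M[C]_n) p : M \is unitarymx ->
  \sum_q M p q * (M p q)^* = 1.
Proof.
move=> Mu; have := congr1 (fun A : 'M[C]_n => A p p) (unitarymxP Mu).
by rewrite /= !mxE eqxx mulr1n => <-; apply: eq_bigr => q _; rewrite !mxE.
Qed.

Lemma unitary_colsum n (M : 'M[C]_n) q : M \is unitarymx ->
  \sum_p M p q * (M p q)^* = 1.
Proof.
move=> Mu; have := congr1 (fun A : 'M[C]_n => A q q) (unitary_tC_mulG Mu).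
by rewrite /= !mxE eqxx mulr1n => <-; apply: eq_bigr => p _; rewrite !mxE mulrC.
Qed.

End Gen.

Section En.
Variable R : realType.
Local Notation C := R[i].

Lemma ge0_complex (w : C) : 0 <= w -> w = (complex.Re w)%:C%C /\ 0 <= complex.Re w.
Proof.
case: w => a b h; have hb := ger0_Im h; simpl in hb; subst b.
by split => //; move: h; rewrite lecE /= => /andP[].
Qed.

Lemma trmxC_mul m n p (A : 'M[C]_(m, n)) (B : 'M[C]_(n, p)) :
  (A *m B)^t* = B^t* *m A^t*.
Proof. by rewrite trmx_mul map_mxM. Qed.

Lemma ReM2 (z : C) (x y : R) :
  complex.Re (z * ((x%:C)%C * (y%:C)%C)) = complex.Re z * x * y.
Proof. by case: z => a c; rewrite /=; ring. Qed.

Lemma energy_bound n (Hn rh X Y U : 'M[C]_n) (e : 'rV[C]_n) (t : 'I_n -> R) (b : R) :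
  0 < b -> X \is unitarymx -> Y \is unitarymx -> U \is unitarymx ->
  Hn = X^t* *m diag_mx e *m X ->
  rh = Y^t* *m diag_mx (\row_q (t q)%:C%C) *m Y ->
  (forall q, 0 <= t q) -> \sum_q t q = 1 ->
  - \sum_q t q * ln (t q) - ln (\sum_p expR (- b * complex.Re (e 0 p)))
    <= b * energy Hn rh U.
Proof.
move=> b0 Xu Yu Uu eH erh t0 t1.
have [Mu trE] := @tr_energy_gen (R[i]) n Hn rh X Y U e (\row_q (t q)%:C%C) Xu Yu Uu eH erh.
set M := X *m U *m Y^t* in Mu trE.
pose P p q := complex.Re (M p q * (M p q)^*).
have PE p q : M p q * (M p q)^* = (P p q)%:C%C /\ 0 <= P p q.
  exact/ge0_complex/mul_conjC_ge0.
have enE : energy Hn rh U =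
    \sum_p \sum_q complex.Re (e 0 p) * t q * P p q.
  rewrite /energy trE raddf_sum; apply: eq_bigr => p _.
  rewrite raddf_sum; apply: eq_bigr => q _.
  by rewrite mxE (PE p q).1 /= ReM2.
have P0 p q : 0 <= P p q by exact: (PE p q).2.
have Pr p : \sum_q P p q = 1.
  by rewrite /P -raddf_sum (unitary_rowsum p Mu).
have Pc q : \sum_p P p q = 1.
  by rewrite /P -raddf_sum (unitary_colsum q Mu).
rewrite enE; exact: gibbs_ineq.
Qed.

Lemma passive_bound n (Hn rh : 'M[C]_n) (L : R) :
  (forall U, U \is unitarymx -> L <= energy Hn rh U) ->
  L <= passive_energy Hn rh.
Proof.
move=> h; apply: lb_le_inf.
  exists (energy Hn rh 1%:M), 1%:M => //=.
  by apply/unitarymxP; rewrite trmx1 map_mx1 mulmx1.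
by move=> _ [U /= Uu <-]; exact: h.
Qed.

End En.

Set Implicit Arguments.
Unset Strict Implicit.
Local Open Scope sesquilinear_scope.

Section Gen2.
Variable C : numClosedFieldType.

Lemma tr_conj_diag n (V : 'M[C]_n) (a b : 'rV[C]_n) : V \in unitmx ->
  \tr ((invmx V *m diag_mx a *m V) *m (invmx V *m diag_mx b *m V)) =
  \sum_i a 0 i * b 0 i.
Proof.
move=> Vu.
have -> : (invmx V *m diag_mx a *m V) *m (invmx V *m diag_mx b *m V) =
   invmx V *m (diag_mx a *m diag_mx b) *m V.
  by rewrite !mulmxA -[invmx V *m diag_mx a *m V *m invmx V]mulmxA mulmxV // mulmx1.
rewrite mxtrace_mulC mulmxA mulmxV // mul1mx /mxtrace.
by apply: eq_bigr => i _; rewrite mul_diag_mx !mxE eqxx mulr1n.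
Qed.

Lemma scale_conj_diag n (V : 'M[C]_n) (a : 'rV[C]_n) (c : C) :
  c *: (invmx V *m diag_mx a *m V) = invmx V *m diag_mx (\row_i (c * a 0 i)) *m V.
Proof.
rewrite scalemxAl scalemxAr; congr (_ *m _ *m _).
by apply/matrixP => i j; rewrite !mxE mulrnAr.
Qed.

Lemma tr_diag_conj n (V : 'M[C]_n) (a : 'rV[C]_n) : V \in unitmx ->
  \tr (invmx V *m diag_mx a *m V) = \sum_i a 0 i.
Proof.
move=> Vu; rewrite mxtrace_mulC mulmxA mulmxV // mul1mx mxtrace_diag.
by [].
Qed.

End Gen2.

Section Gib.
Variable R : realType.
Local Notation C := R[i].

Lemma gibbs_facts d (H : 'M[C]_d) (b : R) : H \is hermsymmx -> 0 < b ->
  b * complex.Re (\tr (H *m gibbs b H)) =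
  vN_entropy (gibbs b H) -
    ln (\sum_a expR (- b * complex.Re (spectral_diag H 0 a))).
Proof.
case: d H => [|d] H hH b0.
  have r0 : complex.Re (0 : R[i]) = 0 by [].
  by rewrite /vN_entropy /mxtrace !big_ord0 ln0 // r0; lra.
set V := spectralmx H; set u := spectral_diag H.
have hV : H = invmx V *m diag_mx u *m V.
  exact/orthomx_spectralP/hermitian_normalmx.
have Vun : V \is unitarymx by exact: spectral_unitarymx.
have Vu : V \in unitmx by exact: spectral_unit.
pose h a := complex.Re (u 0 a).
pose g x := expR (- b * x).
set Z := \sum_a g (h a).
apply: (@eq_trans _ _ (vN_entropy (gibbs b H) - ln Z)); last by [].
have Z0 : 0 < Z.
  rewrite /Z (bigD1 ord0) //=; apply: ltr_pwDl; first exact: expR_gt0.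
  by apply: sumr_ge0 => i _; exact: ltW (expR_gt0 _).
have hE : mxfun g H = invmx V *m diag_mx (map_mx (fC g) u) *m V by [].
have trE : \tr (mxfun g H) = (Z%:C)%C.
  rewrite hE (tr_diag_conj (C := R[i])) // rmorph_sum.
  by apply: eq_bigr => a _; rewrite mxE.
pose G a := g (h a) / Z.
pose w := \row_a ((G a)%:C)%C.
have hG : gibbs b H = invmx V *m diag_mx w *m V.
  rewrite /gibbs -/(g _) trE hE (scale_conj_diag (C := R[i])); congr (_ *m _ *m _).
  congr diag_mx; apply/matrixP => i j; rewrite !mxE /G /fC.
  by rewrite -fmorphV -rmorphM mulrC.
have Gn : gibbs b H \is normalmx.
  by apply/orthomx_spectral_subproof; exists (V, w).
have hL := mxfun_diag (@ln R) Gn Vu hG.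
have Gsum : \sum_a G a = 1.
  by rewrite /G -mulr_suml mulfV // gt_eqF.
have lnG a : ln (G a) = - b * h a - ln Z.
  by rewrite /G ln_div ?posrE ?expR_gt0 // /g expRK.
have vNE : vN_entropy (gibbs b H) = - \sum_a G a * ln (G a).
  rewrite /vN_entropy hL hG (tr_conj_diag (C := R[i])) // raddf_sum.
  congr (- _); apply: eq_bigr => a _; rewrite !mxE /fC /= mulr0 subr0.
  by [].
have enE : complex.Re (\tr (H *m gibbs b H)) = \sum_a h a * G a.
  rewrite hG {1}hV (tr_conj_diag (C := R[i])) // raddf_sum.
  by apply: eq_bigr => a _; rewrite mxE /= ReM_real.
rewrite vNE enE.
have E2 : \sum_a G a * ln (G a) = \sum_a G a * (- b * h a - ln Z).
  by apply: eq_bigr => a _; rewrite lnG.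
rewrite E2.
have -> : \sum_a G a * (- b * h a - ln Z) = - b * \sum_a h a * G a - ln Z.
  rewrite mulr_sumr -[in RHS](mul1r (ln Z)) -Gsum mulr_suml -sumrB.
  by apply: eq_bigr => a _; ring.
ring.
Qed.

End Gib.

Set Implicit Arguments.
Unset Strict Implicit.
Local Open Scope sesquilinear_scope.

Section Gen3.
Variable C : numClosedFieldType.

Lemma conj_entry n (W A : 'M[C]_n) a :
  (W *m A *m W^t*) a a = (row a W *m A *m (row a W)^t*) 0 0.
Proof.
rewrite !mxE; apply: eq_bigr => l _; rewrite !mxE; congr (_ * _).
by apply: eq_bigr => k _; rewrite !mxE.
Qed.

Lemma unitary_conj_back n (W A : 'M[C]_n) (D : 'M[C]_n) : W \is unitarymx ->
  A = invmx W *m D *m W -> W *m A *m W^t* = D.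
Proof.
move=> Wu ->; rewrite invmx_unitary //.
by rewrite !mulmxA (unitarymxP Wu) mul1mx -mulmxA (unitarymxP Wu) mulmx1.
Qed.

End Gen3.

Section Dens.
Variable R : realType.
Local Notation C := R[i].
Variable d : nat.

Definition eigx (rh : 'M[C]_d) (a : 'I_d) : R := complex.Re (spectral_diag rh 0 a).

Lemma density_diag (rh : 'M[C]_d) : density rh ->
  [/\ rh = (spectralmx rh)^t* *m diag_mx (spectral_diag rh) *m spectralmx rh
        /\ spectralmx rh \is unitarymx,
      spectral_diag rh = \row_a ((eigx rh a)%:C)%C,
      (forall a, 0 <= eigx rh a), \sum_a eigx rh a = 1 &
      vN_entropy rh = - \sum_a eigx rh a * ln (eigx rh a)].
Proof.
move=> [[hH psd] tr1].
set W := spectralmx rh; set sd := spectral_diag rh.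
have hr : rh = invmx W *m diag_mx sd *m W.
  exact/orthomx_spectralP/hermitian_normalmx.
have Wu : W \is unitarymx by exact: spectral_unitarymx.
have Wun : W \in unitmx by exact: spectral_unit.
have sd0 a : 0 <= sd 0 a.
  have := unitary_conj_back Wu hr => /(congr1 (fun M : 'M[C]_d => M a a)).
  rewrite conj_entry [diag_mx _ _ _]mxE eqxx mulr1n => <-; exact: psd.
have sdE : sd = \row_a ((eigx rh a)%:C)%C.
  by apply/rowP => a; rewrite mxE; exact: (ge0_complex (sd0 a)).1.
split => //.
- by split; [rewrite -(invmx_unitary Wu) | exact: Wu].
- by move=> a; exact: (ge0_complex (sd0 a)).2.
- have t1 : \tr (invmx W *m diag_mx sd *m W) = 1 by rewrite -hr.
  move: t1; rewrite (tr_diag_conj (C := R[i])) // => /(congr1 (@complex.Re R)).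
  move=> h; have e1 : complex.Re (1 : R[i]) = 1 by [].
  by rewrite e1 raddf_sum in h; rewrite -h.
- rewrite /vN_entropy.
  have hL : mxfun (@ln R) rh = invmx W *m diag_mx (map_mx (fC (@ln R)) sd) *m W by [].
  rewrite hL {1}hr (tr_conj_diag (C := R[i])) // raddf_sum; congr (- _).
  apply: eq_bigr => a _; rewrite mxE /fC (ge0_complex (sd0 a)).1 /=.
  by rewrite mulr0 subr0.
Qed.

End Dens.

Set Implicit Arguments.
Unset Strict Implicit.
Local Open Scope sesquilinear_scope.

Section Fac.
Variable R : realType.
Local Notation C := R[i].
Variables (d k : nat) (p : 'I_k -> R) (rho : 'I_k -> 'M[C]_d) (N : nat).

Lemma factor_in x : x \in factor_seq p rho N -> exists i, x = rho i.
Proof.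
by move/flattenP => [s /mapP [i _ ->] /nseqP [-> _]]; exists i.
Qed.

Lemma iter_add (V : nmodType) n (x : V) : iter n (+%R x) 0 = x *+ n.
Proof. by elim: n => [|n IH] //=; rewrite IH mulrS. Qed.

Lemma sum_factor (V : nmodType) (F : 'M[C]_d -> V) :
  \sum_(x <- factor_seq p rho N) F x = \sum_i F (rho i) *+ ncopies p N i.
Proof.
rewrite /factor_seq big_flatten /= big_map big_enum /=.
by apply: eq_bigr => i _; rewrite big_nseq iter_add.
Qed.

Lemma size_factor : size (factor_seq p rho N) = (\sum_i ncopies p N i)%N.
Proof.
rewrite -sum1_size /factor_seq big_flatten /= big_map big_enum /=.
apply: eq_bigr => i _; rewrite big_nseq.
by elim: (ncopies p N i) => [|n IH] //=; rewrite IH.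
Qed.

End Fac.

Section Ncop.
Variable R : realType.

Lemma ncopies_facts k (p : 'I_k.+1 -> R) N : (forall i, 0 <= p i) ->
  \sum_i p i = 1 ->
  (\sum_i ncopies p N i = N)%N /\
  (forall i, p i * N%:R - 1 <= (ncopies p N i)%:R) /\
  p ord0 * N%:R <= (ncopies p N ord0)%:R.
Proof.
move=> p0 p1.
set S := (\sum_(l < k.+1 | (0 < val l)%N) Num.truncn (p l * N%:R))%N.
have SE : S = (\sum_(i < k) Num.truncn (p (lift ord0 i) * N%:R))%N.
  by rewrite /S big_mkcond big_ord_recl /=.
have prest : \sum_(i < k) p (lift ord0 i) = 1 - p ord0.
  by rewrite -p1 big_ord_recl addrC addKr.
have SR : (S%:R : R) <= (1 - p ord0) * N%:R.
  rewrite SE natr_sum -prest mulr_suml; apply: ler_sum => i _.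
  by rewrite truncn_le mulr_ge0.
have pi1 : p ord0 <= 1.
  rewrite -p1 big_ord_recl lerDl; apply: sumr_ge0 => i _; exact: p0.
have SN : (S <= N)%N.
  rewrite -(ler_nat R); apply: le_trans SR _.
  rewrite -[X in _ <= X]mul1r; apply: ler_wpM2r => //; rewrite lerBlDr lerDl; exact: p0.
have n0 : ncopies p N ord0 = (N - S)%N by [].
have n0R : p ord0 * N%:R <= (ncopies p N ord0)%:R.
  rewrite n0 natrB //; move: SR; lra.
split.
  rewrite big_ord_recl n0 -SE subnK //.
split => // i.
have [->|i0] := eqVneq i ord0; first by move: n0R; lra.
have -> : ncopies p N i = Num.truncn (p i * N%:R).
  rewrite /ncopies; case: ifP => // /eqP v0.
  by case/eqP: i0; apply: val_inj.
have := truncnS_gt (p i * N%:R); rewrite -addn1 natrD; lra.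
Qed.

End Ncop.

Set Implicit Arguments.
Unset Strict Implicit.
Local Open Scope sesquilinear_scope.

Section PerN.
Variable R : realType.
Local Notation C := R[i].

Lemma perN_bound d (H : 'M[C]_d) k (p : 'I_k -> R) (rho : 'I_k -> 'M[C]_d) (b : R) N :
  (0 < d)%N -> H \is hermsymmx -> 0 < b -> (forall i, density (rho i)) ->
  size (factor_seq p rho N) = N ->
  (\sum_i (ncopies p N i)%:R * vN_entropy (rho i) -
    N%:R * ln (\sum_a expR (- b * complex.Re (spectral_diag H 0 a)))) / b
  <= passive_energy (local_ham N H) (rhoN p rho N).
Proof.
move=> d0 hH b0 dens sizeN.
set fs := factor_seq p rho N.
pose F j := nth 0 fs j.
have hF j : (j < N)%N -> density (F j).
  move=> jN; have : F j \in fs by apply: mem_nth; rewrite sizeN.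
  by move=> /factor_in [i ->].
set V := spectralmx H; set u := spectral_diag H.
have Vun : V \is unitarymx by exact: spectral_unitarymx.
have hV : H = V^t* *m diag_mx u *m V.
  rewrite -(invmx_unitary Vun); exact/orthomx_spectralP/hermitian_normalmx.
set Z := \sum_a expR (- b * complex.Re (u 0 a)).
have Z0 : 0 < Z.
  rewrite /Z; case: d d0 {H hH V Vun hV Z dens rho F hF fs sizeN} u => [//|d] _ u.
  rewrite (bigD1 ord0) //=; apply: ltr_pwDl; first exact: expR_gt0.
  by apply: sumr_ge0 => i _; exact: ltW (expR_gt0 _).
set X := tens N (fun _ => V).
have Xu : X \is unitarymx by apply: tens_unitary.
have hHn := local_ham_decomp N Vun hV.
have [offd sumZ] := Eham_prop N u b.
set e := \row_q Eham N u q q.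
have hE : Eham N u = diag_mx e by exact: diag_of.
set Y := tens N (fun j => spectralmx (F j)).
have Yu : Y \is unitarymx.
  by apply: tens_unitary => i iN; have [[_ ?] _ _ _ _] := density_diag (hF i iN).
set T := tens N (fun j => diag_mx (spectral_diag (F j))).
have hrho : rhoN p rho N = Y^t* *m T *m Y.
  rewrite /Y /T tens_tC !tens_mul /rhoN; apply: tens_eq => i iN.
  by have [[? _] _ _ _ _] := density_diag (hF i iN).
pose x j a := eigx (F j) a.
have [offT [t [tE t0 t1 tln]]] := @tens_diag_prob R d N x
  (fun j => diag_mx (spectral_diag (F j)))
  (fun i iN => congr1 diag_mx (let: And5 _ h _ _ _ := density_diag (hF i iN) in h))
  (fun i a iN => let: And5 _ _ h _ _ := density_diag (hF i iN) in h a)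
  (fun i iN => let: And5 _ _ _ h _ := density_diag (hF i iN) in h).
have hT : T = diag_mx (\row_q (t q)%:C%C).
  rewrite /T (diag_of offT); congr diag_mx; apply/rowP => q; rewrite !mxE; exact: tE.
have entS : - \sum_q t q * ln (t q) =
    \sum_i (ncopies p N i)%:R * vN_entropy (rho i).
  rewrite tln.
  have -> : \sum_(j < N) \sum_a x j a * ln (x j a) =
      - \sum_(j < N) vN_entropy (F j).
    rewrite -sumrN; apply: eq_bigr => j _.
    by have [_ _ _ _ ->] := density_diag (hF j (ltn_ord j)); rewrite opprK.
  rewrite opprK.
  have := sum_factor p rho N (@vN_entropy R d).
  rewrite (big_nth 0) big_mkord -/fs sizeN => ->.
  by apply: eq_bigr => i _; rewrite mulr_natl.
have lnZ : ln (\sum_p expR (- b * complex.Re (e 0 p))) = N%:R * ln Z.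
  have -> : \sum_p expR (- b * complex.Re (e 0 p)) = Z ^+ N.
    by rewrite -sumZ; apply: eq_bigr => q _; rewrite mxE.
  by rewrite lnXn // mulr_natl.
apply: passive_bound => U Uu.
have hHn' : local_ham N H = X^t* *m diag_mx e *m X by rewrite -hE.
have hrho' : rhoN p rho N = Y^t* *m diag_mx (\row_q (t q)%:C%C) *m Y by rewrite -hT.
have := energy_bound b0 Xu Yu Uu hHn' hrho' t0 t1.
rewrite lnZ entS => h.
by rewrite ler_pdivrMr // [_ * b]mulrC.
Qed.

End PerN.

Unset Implicit Arguments.
Set Strict Implicit.
Local Close Scope sesquilinear_scope.

Lemma entropy_ge0 (R : realType) d (rh : 'M[R[i]]_d) : density rh -> 0 <= vN_entropy rh.
Proof.
move=> /density_diag [_ _ x0 x1 ->].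
rewrite oppr_ge0; apply: sumr_le0 => a _.
rewrite mulr_ge0_le0 ?x0 // ln_le0 // -x1 (bigD1 a) //= lerDl.
by apply: sumr_ge0 => i _; exact: x0.
Qed.

Theorem mainTheorem6 (R : realType) (d : nat) (H : 'M[R[i]]_d)
  (k : nat) (p : 'I_k -> R) (rho : 'I_k -> 'M[R[i]]_d) (beta : R) :
  H \is hermsymmx ->
  (forall i, 0 <= p i) ->
  \sum_(i < k) p i = 1 ->
  (forall i, density (rho i)) ->
  0 < beta ->
  vN_entropy (gibbs beta H) = \sum_(i < k) p i * vN_entropy (rho i) ->
  ((complex.Re (\tr (H *m gibbs beta H)))%:E <=
    limn_einf (fun N : nat =>
      ((N%:R)^-1 * passive_energy (local_ham N H) (rhoN p rho N))%:E))%E.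
Proof.
move=> hH p0 p1 dens b0 hS.
case: k p rho p0 p1 dens hS => [|k] p rho p0 p1 dens hS.
  by move: p1; rewrite big_ord0 => /esym/eqP; rewrite oner_eq0.
have d0 : (0 < d)%N.
  case: d H rho hH dens {hS} => [|d] // H rho hH dens.
  have [_ /eqP] := dens ord0; rewrite /mxtrace big_ord0 eq_sym oner_eq0 //.
set Z := \sum_a expR (- beta * complex.Re (spectral_diag H 0 a)).
have hG := gibbs_facts hH b0; rewrite -/Z in hG.
set Tg := complex.Re (\tr (H *m gibbs beta H)) in hG *.
set K := \sum_i vN_entropy (rho i).
have S0 i : 0 <= vN_entropy (rho i) by exact: entropy_ge0.
have K0 : 0 <= K by apply: sumr_ge0 => i _.
have bound N : (0 < N)%N ->
    Tg - K / (beta * N%:R) <=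
    (N%:R)^-1 * passive_energy (local_ham N H) (rhoN p rho N).
  move=> N0.
  have [sumN [ncp ncp0]] := ncopies_facts N p0 p1.
  have sz : size (factor_seq p rho N) = N by rewrite size_factor.
  have := perN_bound d0 hH b0 dens sz; rewrite -/Z => hb.
  have hsum : N%:R * vN_entropy (gibbs beta H) - K <=
      \sum_i (ncopies p N i)%:R * vN_entropy (rho i).
    rewrite hS mulr_sumr /K -sumrB; apply: ler_sum => i _.
    have := ncp i; have := S0 i.
    move=> s0 hn.
    have -> : N%:R * (p i * vN_entropy (rho i)) - vN_entropy (rho i) =
      (p i * N%:R - 1) * vN_entropy (rho i) by ring.
    exact: ler_wpM2r.
  have N0R : 0 < (N%:R : R) by rewrite ltr0n.
  rewrite ler_pdivlMl // mulrBr.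
  apply: le_trans _ hb.
  rewrite ler_pdivlMr // mulrBl.
  have -> : N%:R * (K / (beta * N%:R)) * beta = K.
    by field; rewrite ?gt_eqF.
  have -> : N%:R * Tg * beta = N%:R * (beta * Tg) by ring.
  rewrite hG.
  move: hsum; lra.
apply/lee_subgt0Pr => e e0.
rewrite limn_einf_lim; apply: lime_ge; first exact: is_cvg_einfs.
set M0 := (Num.truncn (K / (beta * e))).+1.
exists M0 => // n /= hn.
apply: le_ereal_inf_tmp => _ [m /= nm <-].
have mM : (M0 <= m)%N by exact: leq_trans hn nm.
have m0 : (0 < m)%N by exact: leq_trans _ mM.
rewrite lee_fin; apply: le_trans (bound m m0).
rewrite lerD2l lerN2 ler_pdivrMr ?mulr_gt0 ?ltr0n //.
have : K / (beta * e) < M0%:R by exact: truncnS_gt.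
move/ltW => h1.
have h2 : (M0%:R : R) <= m%:R by rewrite ler_nat.
have h3 : K <= beta * e * m%:R.
  have hKe : K = (beta * e) * (K / (beta * e)) by field; rewrite ?gt_eqF.
  rewrite [X in X <= _]hKe; apply: ler_wpM2l; last exact: le_trans h1 h2.
  exact/ltW/mulr_gt0.
by rewrite mulrA [e * beta]mulrC.
Qed.
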